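(* Let $G$ be a group, $N\unlhd G$, and $M=\mathcal{M}(G,N)$. Then (i) $M$ is residually finite if and only if $G$ is residually finite; (ii) the action of $M$ on its $\mathcal{L}$-classes is residually finite if and only if the group $G/N$ is residually finite.
   Context: For a group $G$ with normal subgroup $N$, let $\overline{N}=\{\overline{n}:n\in N\}$ be a disjoint copy of $N$ and define the monoid $\mathcal{M}(G,N)$ by the presentation with generators $G\cup\overline{N}\cup\{h\}$ (together with the multiplication tables of $G$ and $\overline{N}$, and a zero $0$) and relations $hn=\overline{n}h$ $(n\in N)$, $he_G=e_{\overline{N}}h=h$, $g\overline{n}=\overline{n}g=gh=h\overline{n}=0$ ($g\in G$, $n\in N$). A monoid/group is residually finite if distinct elements are separated by homomorphisms to finite monoids/groups. $x\mathcal{L}y$ iff $Mx=My$; $M$ acts on the right on $M/\mathcal{L}$ via $L_x\cdot m=L_{xm}$. This action is residually finite iff for all $(s,t)\notin\mathcal{L}$ there is a finite-index right congruence $\rho$ on $M$ with $\mathcal{L}\subseteq\rho$ and $(s,t)\notin\rho$. *)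

(* Defs.v *)
From Stdlib Require Import List Classical ClassicalEpsilon
  FunctionalExtensionality PropExtensionality ProofIrrelevance.
Import ListNotations.
Set Implicit Arguments.

Record Group := {
  gcar :> Type;
  gmul : gcar -> gcar -> gcar;
  gone : gcar;
  ginv : gcar -> gcar;
  gassoc : forall x y z, gmul x (gmul y z) = gmul (gmul x y) z;
  gmul1l : forall x, gmul gone x = x;
  gmul1r : forall x, gmul x gone = x;
  gmulVl : forall x, gmul (ginv x) x = gone;
  gmulVr : forall x, gmul x (ginv x) = gone }.
Arguments gmul {g}. Arguments gone {g}. Arguments ginv {g}.

Record Monoid := {
  mcar :> Type;
  mmul : mcar -> mcar -> mcar;
  mone : mcar;
  massoc : forall x y z, mmul x (mmul y z) = mmul (mmul x y) z;
  mmul1l : forall x, mmul mone x = x;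
  mmul1r : forall x, mmul x mone = x }.
Arguments mmul {m}. Arguments mone {m}.

Definition is_finite (T : Type) : Prop := exists l : list T, forall x, In x l.

Definition group_hom {G H : Group} (f : G -> H) : Prop :=
  forall x y, f (gmul x y) = gmul (f x) (f y).

Definition monoid_hom {M P : Monoid} (f : M -> P) : Prop :=
  (forall x y, f (mmul x y) = mmul (f x) (f y)) /\ f mone = mone.

Definition residually_finite_group (G : Group) : Prop :=
  forall x y : G, x <> y ->
    exists F : Group, is_finite F /\
      exists f : G -> F, group_hom f /\ f x <> f y.

Definition residually_finite_monoid (M : Monoid) : Prop :=
  forall x y : M, x <> y ->
    exists F : Monoid, is_finite F /\
      exists f : M -> F, monoid_hom f /\ f x <> f y.

Record MSet (M : Monoid) := {
  scar :> Type;
  sact : scar -> M -> scar;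
  sact1 : forall x, sact x mone = x;
  sactM : forall x a b, sact (sact x a) b = sact x (mmul a b) }.

Definition residually_finite_action (M : Monoid) (X : Type)
    (act : X -> M -> X) : Prop :=
  forall x y : X, x <> y ->
    exists Y : MSet M, is_finite Y /\
      exists f : X -> Y,
        (forall z m, f (act z m) = sact Y (f z) m) /\ f x <> f y.

Section Quot.
Variable T : Type.
Variable R : T -> T -> Prop.

Definition quot : Type := {P : T -> Prop | exists x, P = R x}.
Definition cls (x : T) : quot := exist _ (R x) (ex_intro _ x eq_refl).
Definition rep (q : quot) : T :=
  proj1_sig (constructive_indefinite_description _ (proj2_sig q)).

Lemma exist_eq_pred (P Q : T -> Prop) (p : exists x, P = R x)
  (q : exists x, Q = R x) : P = Q ->
  exist (fun P => exists x, P = R x) P p = exist (fun P => exists x, P = R x) Q q.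
Proof. intros ->. f_equal. apply proof_irrelevance. Qed.

Lemma cls_rep q : cls (rep q) = q.
Proof.
  destruct q as [P HP]. unfold rep, cls; simpl.
  destruct (constructive_indefinite_description _ HP) as [x Hx]; simpl.
  apply exist_eq_pred. now symmetry.
Qed.

Hypothesis Rrefl : forall x, R x x.
Hypothesis Rsym : forall x y, R x y -> R y x.
Hypothesis Rtrans : forall x y z, R x y -> R y z -> R x z.

Lemma cls_eq x y : R x y -> cls x = cls y.
Proof.
  intro H. apply exist_eq_pred. extensionality z. apply propositional_extensionality.
  split; intro; eauto.
Qed.

Lemma cls_inj x y : cls x = cls y -> R x y.
Proof.
  intro H. apply (f_equal (@proj1_sig _ _)) in H. simpl in H.
  rewrite H. apply Rrefl.
Qed.

Lemma rep_cls x : R (rep (cls x)) x.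
Proof. apply cls_inj. now rewrite cls_rep. Qed.

End Quot.

Definition normal_subgroup (G : Group) (N : G -> Prop) : Prop :=
  N gone /\ (forall x y, N x -> N y -> N (gmul x y)) /\
  (forall x, N x -> N (ginv x)) /\
  (forall g x, N x -> N (gmul (gmul (ginv g) x) g)).

Section GroupFacts.
Variable G : Group.

Lemma inv_uniq (x y : G) : gmul x y = gone -> y = ginv x.
Proof.
  intro H. rewrite <- (gmul1l G y), <- (gmulVl G x), <- gassoc, H, gmul1r.
  reflexivity.
Qed.

Lemma inv_inv (x : G) : ginv (ginv x) = x.
Proof. symmetry. apply inv_uniq. apply gmulVl. Qed.

Lemma inv_mul (x y : G) : ginv (gmul x y) = gmul (ginv y) (ginv x).
Proof.
  symmetry. apply inv_uniq.
  rewrite gassoc, <- (gassoc G x y), gmulVr, gmul1r, gmulVr. reflexivity.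
Qed.
End GroupFacts.

Section QuotientGroup.
Variable G : Group.
Variable N : G -> Prop.
Hypothesis HN : normal_subgroup G N.

Definition cosrel (a b : G) : Prop := N (gmul (ginv a) b).

Lemma cosrel_refl a : cosrel a a.
Proof. unfold cosrel. rewrite gmulVl. apply HN. Qed.

Lemma cosrel_sym a b : cosrel a b -> cosrel b a.
Proof.
  unfold cosrel; intro H. destruct HN as (_ & _ & Hi & _).
  apply Hi in H. rewrite inv_mul, inv_inv in H. exact H.
Qed.

Lemma cosrel_trans a b c : cosrel a b -> cosrel b c -> cosrel a c.
Proof.
  unfold cosrel; intros H1 H2. destruct HN as (_ & Hm & _ & _).
  pose proof (Hm _ _ H1 H2) as H.
  rewrite <- gassoc, (gassoc G b), gmulVr, gmul1l in H. exact H.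
Qed.

Lemma cosrel_mul a a' b b' :
  cosrel a a' -> cosrel b b' -> cosrel (gmul a b) (gmul a' b').
Proof.
  unfold cosrel; intros H1 H2. destruct HN as (_ & Hm & _ & Hc).
  pose proof (Hm _ _ (Hc b _ H1) H2) as H.
  replace (gmul (ginv (gmul a b)) (gmul a' b'))
    with (gmul (gmul (gmul (ginv b) (gmul (ginv a) a')) b) (gmul (ginv b) b'));
  [exact H|].
  rewrite inv_mul. rewrite <- !gassoc. f_equal. f_equal. f_equal.
  rewrite (gassoc G b), gmulVr, gmul1l. reflexivity.
Qed.

Lemma cosrel_inv a b : cosrel a b -> cosrel (ginv a) (ginv b).
Proof.
  unfold cosrel; intro H. destruct HN as (_ & _ & Hi & Hc).
  pose proof (Hc (ginv a) _ (Hi _ H)) as H'.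
  rewrite inv_inv, inv_mul, inv_inv in H'.
  rewrite inv_inv.
  replace (gmul a (ginv b)) with (gmul (gmul a (gmul (ginv b) a)) (ginv a)); [exact H'|].
  rewrite <- !gassoc, gmulVr, gmul1r. reflexivity.
Qed.

Definition qcar := quot cosrel.
Definition qmul (p q : qcar) : qcar := cls cosrel (gmul (rep p) (rep q)).
Definition qone : qcar := cls cosrel gone.
Definition qinv (p : qcar) : qcar := cls cosrel (ginv (rep p)).

Lemma qcls_eq a b : cosrel a b -> cls cosrel a = cls cosrel b.
Proof. apply cls_eq; eauto using cosrel_refl, cosrel_sym, cosrel_trans. Qed.

Lemma qrep_cls a : cosrel (rep (cls cosrel a)) a.
Proof. apply rep_cls; eauto using cosrel_refl, cosrel_sym, cosrel_trans. Qed.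

Lemma qmul_cls a b : qmul (cls cosrel a) (cls cosrel b) = cls cosrel (gmul a b).
Proof. apply qcls_eq, cosrel_mul; apply qrep_cls. Qed.

Lemma qinv_cls a : qinv (cls cosrel a) = cls cosrel (ginv a).
Proof. apply qcls_eq, cosrel_inv, qrep_cls. Qed.

Ltac qelim p := rewrite <- (cls_rep p); generalize (rep p); clear p; intro.

Lemma qassoc x y z : qmul x (qmul y z) = qmul (qmul x y) z.
Proof. qelim x; qelim y; qelim z. rewrite !qmul_cls, gassoc. reflexivity. Qed.
Lemma qmul1l x : qmul qone x = x.
Proof. qelim x. unfold qone. rewrite qmul_cls, gmul1l. reflexivity. Qed.
Lemma qmul1r x : qmul x qone = x.
Proof. qelim x. unfold qone. rewrite qmul_cls, gmul1r. reflexivity. Qed.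
Lemma qmulVl x : qmul (qinv x) x = qone.
Proof. qelim x. rewrite qinv_cls, qmul_cls, gmulVl. reflexivity. Qed.
Lemma qmulVr x : qmul x (qinv x) = qone.
Proof. qelim x. rewrite qinv_cls, qmul_cls, gmulVr. reflexivity. Qed.

Definition quotient_group : Group :=
  @Build_Group qcar qmul qone qinv qassoc qmul1l qmul1r qmulVl qmulVr.
End QuotientGroup.

Section MGN.
Variable G : Group.
Variable N : G -> Prop.

Inductive Gen : Type :=
  | gG : G -> Gen
  | gNbar : {n : G | N n} -> Gen
  | gh : Gen
  | gzero : Gen.

Definition word := list Gen.

Inductive defrel : word -> word -> Prop :=
  | r_Gtab (g1 g2 : G) : defrel [gG g1; gG g2] [gG (gmul g1 g2)]
  | r_Ntab (a b c : {n : G | N n}) :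
      proj1_sig c = gmul (proj1_sig a) (proj1_sig b) ->
      defrel [gNbar a; gNbar b] [gNbar c]
  | r_zero_l (x : Gen) : defrel [gzero; x] [gzero]
  | r_zero_r (x : Gen) : defrel [x; gzero] [gzero]
  | r_hn (n : {n : G | N n}) : defrel [gh; gG (proj1_sig n)] [gNbar n; gh]
  | r_heG : defrel [gh; gG gone] [gh]
  | r_eNh (e : {n : G | N n}) : proj1_sig e = gone -> defrel [gNbar e; gh] [gh]
  | r_gn (g : G) (n : {n : G | N n}) : defrel [gG g; gNbar n] [gzero]
  | r_ng (g : G) (n : {n : G | N n}) : defrel [gNbar n; gG g] [gzero]
  | r_gh (g : G) : defrel [gG g; gh] [gzero]
  | r_hn0 (n : {n : G | N n}) : defrel [gh; gNbar n] [gzero].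

Inductive cong : word -> word -> Prop :=
  | c_rel u v : defrel u v -> cong u v
  | c_refl u : cong u u
  | c_sym u v : cong u v -> cong v u
  | c_trans u v w : cong u v -> cong v w -> cong u w
  | c_ctx p u v q : cong u v -> cong (p ++ u ++ q) (p ++ v ++ q).

Lemma cong_app u u' v v' : cong u u' -> cong v v' -> cong (u ++ v) (u' ++ v').
Proof.
  intros H1 H2. apply c_trans with (u' ++ v).
  - exact (c_ctx [] v H1).
  - pose proof (c_ctx u' [] H2) as H. rewrite !app_nil_r in H. exact H.
Qed.

Definition Mcar := quot cong.
Definition Mmul (p q : Mcar) : Mcar := cls cong (rep p ++ rep q).
Definition Mone : Mcar := cls cong [].

Lemma Mcls_eq u v : cong u v -> cls cong u = cls cong v.
Proof. apply cls_eq; eauto using c_refl, c_sym, c_trans. Qed.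
Lemma Mrep_cls u : cong (rep (cls cong u)) u.
Proof. apply rep_cls; eauto using c_refl, c_sym, c_trans. Qed.
Lemma Mmul_cls u v : Mmul (cls cong u) (cls cong v) = cls cong (u ++ v).
Proof. apply Mcls_eq, cong_app; apply Mrep_cls. Qed.

Ltac melim p := rewrite <- (cls_rep p); generalize (rep p); clear p; intro.

Lemma Massoc x y z : Mmul x (Mmul y z) = Mmul (Mmul x y) z.
Proof. melim x; melim y; melim z. rewrite !Mmul_cls, app_assoc. reflexivity. Qed.
Lemma Mmul1l x : Mmul Mone x = x.
Proof. melim x. unfold Mone. rewrite Mmul_cls. reflexivity. Qed.
Lemma Mmul1r x : Mmul x Mone = x.
Proof. melim x. unfold Mone. rewrite Mmul_cls, app_nil_r. reflexivity. Qed.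

Definition MGN : Monoid := @Build_Monoid Mcar Mmul Mone Massoc Mmul1l Mmul1r.
End MGN.

Definition Lrel (M : Monoid) (x y : M) : Prop :=
  forall z, (exists a, z = mmul a x) <-> (exists b, z = mmul b y).

Definition Lclasses (M : Monoid) : Type := quot (@Lrel M).

Definition Lact (M : Monoid) (c : Lclasses M) (m : M) : Lclasses M :=
  cls (@Lrel M) (mmul (rep c) m).

(* Main.v *)
Require Import Defs.
From Stdlib Require Import List Classical ClassicalEpsilon
  FunctionalExtensionality PropExtensionality ProofIrrelevance.
Import ListNotations.
Set Implicit Arguments.

Lemma fin_inj (A T : Type) (i : A -> T) (L : list T) :
  (forall x y, i x = i y -> x = y) -> (forall x, In (i x) L) -> is_finite A.
Proof.
  intros Hinj HL.
  exists (flat_map (fun t => match excluded_middle_informative (exists a, i a = t) with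
     | left H => [proj1_sig (constructive_indefinite_description _ H)]
     | right _ => [] end) L).
  intro x. apply in_flat_map. exists (i x). split; [apply HL|].
  destruct (excluded_middle_informative _) as [H|H].
  - destruct (constructive_indefinite_description _ H) as [y Hy]; simpl. left; auto.
  - exfalso; apply H; eauto.
Qed.

Fixpoint allseq {T} (l : list T) (n : nat) : list (list T) :=
  match n with 0 => [[]] | S n => flat_map (fun s => map (fun y => y :: s) l) (allseq l n) end.

Lemma allseq_in T (l : list T) s : (forall x, In x s -> In x l) -> In s (allseq l (length s)).
Proof.
  induction s as [|a s IH]; simpl; intros H; [left; auto|].
  apply in_flat_map. exists s. split.
  - apply IH; intros; apply H; right; auto.
  - apply (in_map (fun y => y :: s)). apply H; left; auto.
Qed.

Lemma map_eq_in T U (F F' : T -> U) l x : map F l = map F' l -> In x l -> F x = F' x.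
Proof.
  induction l; simpl; intros H Hx; [contradiction|].
  injection H; intros. destruct Hx; subst; auto.
Qed.

Lemma fun_finite T : is_finite T -> is_finite (T -> T).
Proof.
  intros [l Hl].
  apply (@fin_inj _ _ (fun F => map F l) (allseq l (length l))).
  - intros F F' H. extensionality x. exact (map_eq_in F F' l x H (Hl x)).
  - intro F. rewrite <- (length_map F l). apply allseq_in. intros x _. apply Hl.
Qed.

Lemma sig_finite T (P : T -> Prop) : is_finite T -> is_finite {x | P x}.
Proof.
  intros [l Hl]. apply (@fin_inj _ _ (@proj1_sig _ _) l).
  - intros [x p] [y q]; simpl; intro; subst. f_equal; apply proof_irrelevance.
  - intros; apply Hl.
Qed.

Lemma hom_one (G H : Group) (f : G -> H) : group_hom f -> f gone = gone.
Proof.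
  intro Hf. pose proof (Hf gone gone) as E. rewrite gmul1l in E.
  rewrite <- (gmulVl H (f gone)). rewrite E at 3.
  rewrite gassoc, gmulVl, gmul1l. reflexivity.
Qed.

Definition TG : Group.
Proof.
  refine (@Build_Group unit (fun _ _ => tt) tt (fun _ => tt) _ _ _ _ _);
  intros; repeat match goal with x : unit |- _ => destruct x end; reflexivity.
Defined.

Lemma TG_finite : is_finite TG.
Proof. exists [tt]. intros []. left; reflexivity. Qed.

Lemma TG_hom (G : Group) : group_hom (fun _ : G => (tt : TG)).
Proof. intros x y. reflexivity. Qed.

Definition EndoMonoid (T : Type) : Monoid :=
  @Build_Monoid (T -> T) (fun f g x => g (f x)) (fun x => x)
    (fun _ _ _ => eq_refl) (fun _ => eq_refl) (fun _ => eq_refl).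

Section ImageGroup.
Variable G : Group.
Variable P : Monoid.
Variable a : G -> P.
Hypothesis Ha : forall x y, a (gmul x y) = mmul (a x) (a y).

Definition IC := {p : P | exists g, p = a g}.
Definition ic_of (g : G) : IC := exist _ (a g) (ex_intro _ g eq_refl).
Definition ic_mul (p q : IC) : IC.
  refine (exist _ (mmul (proj1_sig p) (proj1_sig q)) _).
  destruct p as [p [g ->]]; destruct q as [q [h ->]]; simpl.
  exists (gmul g h). rewrite Ha. reflexivity.
Defined.
Definition ic_rep (p : IC) : G :=
  proj1_sig (constructive_indefinite_description _ (proj2_sig p)).
Lemma ic_spec p : proj1_sig p = a (ic_rep p).
Proof. unfold ic_rep. destruct (constructive_indefinite_description _ _); auto. Qed.
Definition ic_inv (p : IC) : IC := ic_of (ginv (ic_rep p)).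
Definition ic_one : IC := ic_of gone.
Lemma ic_eq (p q : IC) : proj1_sig p = proj1_sig q -> p = q.
Proof. destruct p, q; simpl; intro; subst; f_equal; apply proof_irrelevance. Qed.
Lemma ic_assoc x y z : ic_mul x (ic_mul y z) = ic_mul (ic_mul x y) z.
Proof. apply ic_eq; simpl; apply massoc. Qed.
Lemma ic_mul1l x : ic_mul ic_one x = x.
Proof. apply ic_eq; simpl. rewrite (ic_spec x), <- Ha, gmul1l; auto. Qed.
Lemma ic_mul1r x : ic_mul x ic_one = x.
Proof. apply ic_eq; simpl. rewrite (ic_spec x), <- Ha, gmul1r; auto. Qed.
Lemma ic_mulVl x : ic_mul (ic_inv x) x = ic_one.
Proof. apply ic_eq; simpl. rewrite (ic_spec x), <- Ha, gmulVl; auto. Qed.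
Lemma ic_mulVr x : ic_mul x (ic_inv x) = ic_one.
Proof. apply ic_eq; simpl. rewrite (ic_spec x), <- Ha, gmulVr; auto. Qed.
Definition ICG : Group := @Build_Group IC ic_mul ic_one ic_inv ic_assoc ic_mul1l ic_mul1r ic_mulVl ic_mulVr.
End ImageGroup.

Lemma image_group (G : Group) (P : Monoid) (a : G -> P) :
  (forall x y, a (gmul x y) = mmul (a x) (a y)) -> is_finite P ->
  exists F : Group, is_finite F /\ exists f : G -> F, group_hom f /\
    forall x y, f x = f y -> a x = a y.
Proof.
  intros Ha HP. exists (@ICG G P a Ha). split.
  - apply sig_finite; auto.
  - exists (@ic_of G P a). split.
    + intros x y. apply ic_eq. simpl. apply Ha.
    + intros x y H. apply (f_equal (@proj1_sig _ _)) in H. exact H.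
Qed.

Inductive Mdl (H : Group) := MOne | MG (g : H) | MN (g : H) | MH (g : H) | MZ.
Arguments MOne {H}. Arguments MZ {H}. Arguments MG {H}. Arguments MN {H}. Arguments MH {H}.

Definition mdl_mul {H : Group} (x y : Mdl H) : Mdl H :=
  match x, y with
  | MOne, y => y
  | x, MOne => x
  | MG a, MG b => MG (gmul a b)
  | MN a, MN b => MN (gmul a b)
  | MN a, MH b => MH (gmul a b)
  | MH a, MG b => MH (gmul a b)
  | _, _ => MZ end.

Lemma mdl_assoc H (x y z : Mdl H) : mdl_mul x (mdl_mul y z) = mdl_mul (mdl_mul x y) z.
Proof. destruct x, y, z; simpl; try reflexivity; rewrite gassoc; reflexivity. Qed.
Lemma mdl_mul1l H (x : Mdl H) : mdl_mul MOne x = x.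
Proof. reflexivity. Qed.
Lemma mdl_mul1r H (x : Mdl H) : mdl_mul x MOne = x.
Proof. destruct x; reflexivity. Qed.

Definition MdlM (H : Group) : Monoid :=
  @Build_Monoid (Mdl H) mdl_mul MOne (@mdl_assoc H) (@mdl_mul1l H) (@mdl_mul1r H).

Definition map_mdl {H K : Group} (f : H -> K) (x : Mdl H) : Mdl K :=
  match x with MOne => MOne | MG g => MG (f g) | MN g => MN (f g) | MH g => MH (f g) | MZ => MZ end.

Lemma map_mdl_mul (H K : Group) (f : H -> K) (x y : Mdl H) : group_hom f ->
  map_mdl f (mdl_mul x y) = mdl_mul (map_mdl f x) (map_mdl f y).
Proof. intro Hf. destruct x, y; simpl; try reflexivity; rewrite Hf; reflexivity. Qed.

Lemma mdl_finite (F : Group) : is_finite F -> is_finite (Mdl F).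
Proof.
  intros [l Hl]. exists (MOne :: MZ :: map (@MG F) l ++ map (@MN F) l ++ map (@MH F) l).
  intro x; destruct x; simpl; auto; right; right; rewrite !in_app_iff.
  - left; apply in_map; auto.
  - right; left; apply in_map; auto.
  - right; right; apply in_map; auto.
Qed.

Lemma sep_mdl (G : Group) (u v : Mdl G) : residually_finite_group G -> u <> v ->
  exists F : Group, is_finite F /\ exists f : G -> F, group_hom f /\ map_mdl f u <> map_mdl f v.
Proof.
  intros RF Huv.
  assert (triv : (forall f : G -> TG, map_mdl f u <> map_mdl f v) ->
     exists F : Group, is_finite F /\ exists f : G -> F, group_hom f /\ map_mdl f u <> map_mdl f v).
  { intro H. exists TG. split; [apply TG_finite|]. exists (fun _ => tt). split; [apply TG_hom|]. apply H. }
  destruct u, v; try (apply triv; intros f; discriminate);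
  try (exfalso; apply Huv; reflexivity);
  (assert (Hg : g <> g0) by (intro; subst; apply Huv; reflexivity);
   destruct (RF _ _ Hg) as (F & HF & f & Hf & Hfg);
   exists F; split; [auto|]; exists f; split; [auto|]; simpl; intro E; injection E; auto).
Qed.
Section MGNsec.
Variable G : Group.
Variable N : G -> Prop.
Hypothesis HN : normal_subgroup G N.

Local Notation GG := (gG G N).
Local Notation NB := (gNbar G N).
Local Notation HH := (gh G N).
Local Notation ZZ := (gzero G N).

Lemma N1 : N gone. Proof. apply HN. Qed.
Lemma Nmul x y : N x -> N y -> N (gmul x y). Proof. apply HN. Qed.
Lemma Ninv x : N x -> N (ginv x). Proof. apply HN. Qed.
Lemma Nconj g x : N x -> N (gmul (gmul (ginv g) x) g). Proof. apply HN. Qed.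

Definition evg (a : Gen G N) : Mdl G :=
  match a with gG _ _ g => MG g | gNbar _ _ n => MN (proj1_sig n)
  | gh _ _ => MH gone | gzero _ _ => MZ end.
Fixpoint ev (w : word G N) : Mdl G :=
  match w with [] => MOne | a :: w => mdl_mul (evg a) (ev w) end.

Lemma ev_app u v : ev (u ++ v) = mdl_mul (ev u) (ev v).
Proof. induction u; simpl; auto. rewrite IHu, mdl_assoc; auto. Qed.

Lemma ev_defrel u v : defrel u v -> ev u = ev v.
Proof.
  destruct 1; simpl; try reflexivity.
  - rewrite H; reflexivity.
  - destruct x; reflexivity.
  - destruct x; reflexivity.
  - rewrite gmul1l, gmul1r; reflexivity.
  - rewrite gmul1l; reflexivity.
  - rewrite H, gmul1r; reflexivity.
Qed.

Lemma ev_cong u v : cong u v -> ev u = ev v.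
Proof.
  induction 1; auto using ev_defrel; try congruence.
  rewrite !ev_app, IHcong; auto.
Qed.

Definition inM (u : Mdl G) : Prop := match u with MN n => N n | _ => True end.

Lemma inM_mul u v : inM u -> inM v -> inM (mdl_mul u v).
Proof. destruct u, v; simpl; auto using Nmul. Qed.
Lemma inM_ev w : inM (ev w).
Proof.
  induction w as [|a w IH]; simpl; [exact I|]. apply inM_mul; auto.
  destruct a; simpl; auto. apply (proj2_sig s).
Qed.

Definition nf (u : Mdl G) : word G N :=
  match u with
  | MOne => [] | MG g => [GG g]
  | MN n => match excluded_middle_informative (N n) with
            | left p => [NB (exist _ n p)] | right _ => [] end
  | MH g => [HH; GG g] | MZ => [ZZ] end.
Arguments nf : simpl never.
Lemma nf_One : nf MOne = []. Proof. reflexivity. Qed.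
Lemma nf_G g : nf (MG g) = [GG g]. Proof. reflexivity. Qed.
Lemma nf_H g : nf (MH g) = [HH; GG g]. Proof. reflexivity. Qed.
Lemma nf_Z : nf MZ = [ZZ]. Proof. reflexivity. Qed.
Lemma nf_MN n (p : N n) : nf (MN n) = [NB (exist _ n p)].
Proof.
  unfold nf. destruct excluded_middle_informative; [|contradiction].
  do 2 f_equal. apply subset_eq_compat; reflexivity.
Qed.
Lemma nf_MN' (n : {n | N n}) : nf (MN (proj1_sig n)) = [NB n].
Proof. destruct n as [n p]. apply nf_MN. Qed.

Lemma ev_nf u : inM u -> ev (nf u) = u.
Proof.
  intro H; destruct u; [rewrite nf_One | rewrite nf_G | rewrite (nf_MN H) | rewrite nf_H | rewrite nf_Z];
  simpl; try reflexivity. rewrite gmul1l; reflexivity.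
Qed.

Ltac crw p q H := eapply c_trans; [exact (c_ctx p q (c_rel H)) | simpl].
Ltac crwr p q H := eapply c_trans; [exact (c_ctx p q (c_sym (c_rel H))) | simpl].

Lemma hh : cong [HH; HH] [ZZ].
Proof.
  crwr [HH] (@nil (Gen G N)) (r_heG G N).
  crw [HH] (@nil (Gen G N)) (r_hn G N (exist _ gone N1)).
  crw (@nil (Gen G N)) [HH] (r_hn0 G N (exist _ gone N1)).
  apply c_rel, r_zero_l.
Qed.

Lemma step a e : inM e -> cong (a :: nf e) (nf (mdl_mul (evg a) e)).
Proof.
  intro He.
  destruct a as [g|n| |]; destruct e as [|g'|m|g'|]; simpl in He;
  cbn [mdl_mul evg];
  repeat rewrite ?nf_One, ?nf_G, ?nf_H, ?nf_Z.
  - apply c_refl.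
  - apply c_rel, r_Gtab.
  - rewrite (nf_MN He). apply c_rel, r_gn.
  - crw (@nil (Gen G N)) [GG g'] (r_gh G N g). apply c_rel, r_zero_l.
  - apply c_rel, r_zero_r.
  - rewrite nf_MN'. apply c_refl.
  - apply c_rel, r_ng.
  - rewrite (nf_MN He). rewrite (nf_MN (Nmul (proj2_sig n) He)).
    apply c_rel. apply r_Ntab. reflexivity.
  - apply c_sym. crwr [HH] (@nil (Gen G N)) (r_Gtab G N (proj1_sig n) g').
    crw (@nil (Gen G N)) [GG g'] (r_hn G N n). apply c_refl.
  - apply c_rel, r_zero_r.
  - apply c_sym, c_rel, r_heG.
  - rewrite gmul1l. apply c_refl.
  - rewrite (nf_MN He). apply c_rel, r_hn0.
  - eapply c_trans; [exact (c_ctx (@nil (Gen G N)) [GG g'] hh)|simpl]. apply c_rel, r_zero_l.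
  - apply c_rel, r_zero_r.
  - apply c_refl.
  - apply c_rel, r_zero_l.
  - rewrite (nf_MN He). apply c_rel, r_zero_l.
  - crw (@nil (Gen G N)) [GG g'] (r_zero_l HH). apply c_rel, r_zero_l.
  - apply c_rel, r_zero_l.
Qed.

Lemma nf_cong w : cong w (nf (ev w)).
Proof.
  induction w as [|a w IH]; simpl.
  - rewrite nf_One; apply c_refl.
  - pose proof (c_ctx [a] (@nil (Gen G N)) IH) as H. rewrite !app_nil_r in H. simpl in H.
    eapply c_trans; [exact H|]. apply step, inM_ev.
Qed.

Local Notation M := (MGN G N).

Definition phi (x : M) : Mdl G := ev (rep x).
Definition psi (u : Mdl G) : M := cls (@cong G N) (nf u).

Lemma phi_cls w : phi (cls (@cong G N) w) = ev w.
Proof. apply ev_cong, Mrep_cls. Qed.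
Lemma phi_mul (x y : M) : phi (mmul x y) = mdl_mul (phi x) (phi y).
Proof. change (phi (cls (@cong G N) (rep x ++ rep y)) = mdl_mul (phi x) (phi y)).
  rewrite phi_cls, ev_app. reflexivity. Qed.
Lemma phi_one : phi (mone : M) = MOne.
Proof. change (phi (cls (@cong G N) []) = MOne). rewrite phi_cls. reflexivity. Qed.
Lemma inM_phi x : inM (phi x).
Proof. apply inM_ev. Qed.
Lemma phi_inj (x y : M) : phi x = phi y -> x = y.
Proof.
  intro H. rewrite <- (cls_rep x), <- (cls_rep y). apply Mcls_eq.
  eapply c_trans; [apply nf_cong|]. unfold phi in H. rewrite H. apply c_sym, nf_cong.
Qed.
Lemma phi_psi u : inM u -> phi (psi u) = u.
Proof. intro H. unfold psi. rewrite phi_cls. apply ev_nf, H. Qed.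

End MGNsec.

Lemma Lrel_refl (M : Monoid) (x : M) : Lrel M x x.
Proof. intro z. reflexivity. Qed.
Lemma Lrel_sym (M : Monoid) (x y : M) : Lrel M x y -> Lrel M y x.
Proof. intros H z. symmetry. apply H. Qed.
Lemma Lrel_trans (M : Monoid) (x y z : M) : Lrel M x y -> Lrel M y z -> Lrel M x z.
Proof. intros H1 H2 w. rewrite (H1 w). apply H2. Qed.
Lemma Lrel_of (M : Monoid) (x y : M) :
  (exists a, x = mmul a y) -> (exists b, y = mmul b x) -> Lrel M x y.
Proof.
  intros [a Ha] [b Hb] z; split; intros [c Hc].
  - exists (mmul c a). rewrite Hc, Ha, massoc. reflexivity.
  - exists (mmul c b). rewrite Hc, Hb, massoc. reflexivity.
Qed.
Lemma Lrel_left (M : Monoid) (x y : M) : Lrel M x y -> exists b, x = mmul b y.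
Proof. intro H. apply (H x). exists mone. rewrite mmul1l. reflexivity. Qed.
Lemma Lrel_right (M : Monoid) (x y m : M) : Lrel M x y -> Lrel M (mmul x m) (mmul y m).
Proof.
  intros H. apply Lrel_of.
  - destruct (Lrel_left H) as [c Hc]. exists c. rewrite Hc, massoc. reflexivity.
  - destruct (Lrel_left (Lrel_sym H)) as [c Hc]. exists c. rewrite Hc, massoc. reflexivity.
Qed.

Lemma ginv_one (G : Group) : ginv (gone : G) = gone.
Proof. symmetry. apply inv_uniq. apply gmul1l. Qed.

Inductive Pt (Q : Group) := P1 | PG | PN | PH (t : Q) | PZ.
Arguments P1 {Q}. Arguments PG {Q}. Arguments PN {Q}. Arguments PH {Q}. Arguments PZ {Q}.

Lemma Pt_finite (Q : Group) : is_finite Q -> is_finite (Pt Q).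
Proof.
  intros [l Hl]. exists (P1 :: PG :: PN :: PZ :: map (@PH Q) l).
  intro x; destruct x; simpl; auto. right; right; right; right; apply in_map; auto.
Qed.

Section Main.
Variable G : Group.
Variable N : G -> Prop.
Hypothesis HN : normal_subgroup G N.
Local Notation M := (MGN G N).
Local Notation cosrel := (cosrel G N).

Lemma Nmul' x y : N x -> N y -> N (gmul x y). Proof. apply HN. Qed.
Lemma Ninv' x : N x -> N (ginv x). Proof. apply HN. Qed.
Lemma Nconj' g x : N x -> N (gmul (gmul (ginv g) x) g). Proof. apply HN. Qed.

Lemma cos_right g g' : cosrel g g' -> N (gmul g' (ginv g)).
Proof.
  intro H. pose proof (Nconj' (ginv g) H) as H'.
  rewrite inv_inv, gassoc, gmulVr, gmul1l in H'. exact H'.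
Qed.
Lemma cos_left g g' : cosrel g g' -> N (gmul g (ginv g')).
Proof.
  intro H. pose proof (Ninv' (cos_right H)) as H'.
  rewrite inv_mul, inv_inv in H'. exact H'.
Qed.
Lemma cos_of_mul n g' : N n -> cosrel (gmul n g') g'.
Proof.
  intro H. unfold Defs.cosrel. rewrite inv_mul. apply Nconj', Ninv', H.
Qed.
Lemma cosrel_lmul k u v : cosrel u v -> cosrel (gmul k u) (gmul k v).
Proof.
  unfold Defs.cosrel. rewrite inv_mul, <- gassoc, (gassoc _ (ginv k)), gmulVl, gmul1l. auto.
Qed.

Definition LM (u v : Mdl G) : Prop :=
  match u, v with
  | MOne, MOne => True | MG _, MG _ => True | MN _, MN _ => True
  | MH g, MH g' => cosrel g g' | MZ, MZ => True | _, _ => False end.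

Lemma phi_eq_mul (x y : M) u : inM N u -> phi x = mdl_mul u (phi y) -> x = mmul (psi N u) y.
Proof. intros Hu H. apply (phi_inj HN). rewrite phi_mul, phi_psi; auto. Qed.

Lemma L_of_LM (x y : M) : LM (phi x) (phi y) -> Lrel M x y.
Proof.
  intro H. pose proof (inM_phi HN x) as Hx. pose proof (inM_phi HN y) as Hy.
  destruct (phi x) eqn:Ex, (phi y) eqn:Ey; simpl in H, Hx, Hy; try contradiction.
  - replace y with x; [apply Lrel_refl|]. apply (phi_inj HN). congruence.
  - apply Lrel_of.
    + exists (psi N (MG (gmul g (ginv g0)))). apply phi_eq_mul; [exact I|].
      rewrite Ex, Ey; simpl. rewrite <- gassoc, gmulVl, gmul1r. reflexivity.
    + exists (psi N (MG (gmul g0 (ginv g)))). apply phi_eq_mul; [exact I|].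
      rewrite Ex, Ey; simpl. rewrite <- gassoc, gmulVl, gmul1r. reflexivity.
  - apply Lrel_of.
    + exists (psi N (MN (gmul g (ginv g0)))). apply phi_eq_mul; [simpl; auto using Nmul', Ninv'|].
      rewrite Ex, Ey; simpl. rewrite <- gassoc, gmulVl, gmul1r. reflexivity.
    + exists (psi N (MN (gmul g0 (ginv g)))). apply phi_eq_mul; [simpl; auto using Nmul', Ninv'|].
      rewrite Ex, Ey; simpl. rewrite <- gassoc, gmulVl, gmul1r. reflexivity.
  - apply Lrel_of.
    + exists (psi N (MN (gmul g (ginv g0)))). apply phi_eq_mul; [simpl; apply cos_left; auto|].
      rewrite Ex, Ey; simpl. rewrite <- gassoc, gmulVl, gmul1r. reflexivity.
    + exists (psi N (MN (gmul g0 (ginv g)))). apply phi_eq_mul; [simpl; apply cos_right; auto|].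
      rewrite Ex, Ey; simpl. rewrite <- gassoc, gmulVl, gmul1r. reflexivity.
  - replace y with x; [apply Lrel_refl|]. apply (phi_inj HN). congruence.
Qed.

Lemma LM_model u v b c : inM N b -> inM N c -> u = mdl_mul b v -> v = mdl_mul c u -> LM u v.
Proof.
  intros Hb Hc H1 H2.
  destruct u, v, b, c; simpl in *; try discriminate; try exact I;
  repeat match goal with H : MH _ = MH _ |- _ => injection H as H end; subst;
  try apply (cosrel_refl HN); try (apply cos_of_mul; auto).
Qed.

Lemma LM_of_L (x y : M) : Lrel M x y -> LM (phi x) (phi y).
Proof.
  intro H. destruct (Lrel_left H) as [b Hb]. destruct (Lrel_left (Lrel_sym H)) as [c Hc].
  apply (@LM_model _ _ (phi b) (phi c)); try apply (inM_phi HN).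
  - rewrite Hb at 1. apply phi_mul.
  - rewrite Hc at 1. apply phi_mul.
Qed.

Lemma part1_fwd : residually_finite_monoid M -> residually_finite_group G.
Proof.
  intros RF g g' Hne.
  assert (Hxy : cls (@Defs.cong G N) [gG G N g] <> cls (@Defs.cong G N) [gG G N g']).
  { intro E. apply (f_equal (@phi G N)) in E. rewrite !phi_cls in E. simpl in E.
    injection E; auto. }
  destruct (RF _ _ Hxy) as (P & HP & f & [Hm H1] & Hsep).
  destruct (@image_group G P (fun k => f (cls (@Defs.cong G N) [gG G N k]))) as (F & HF & h & Hh & Hs); auto.
  - intros k k'. rewrite <- Hm. f_equal. apply (phi_inj HN).
    rewrite phi_mul, !phi_cls. reflexivity.
  - exists F. split; auto. exists h. split; auto.
Qed.

Lemma part1_bwd : residually_finite_group G -> residually_finite_monoid M.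
Proof.
  intros RF x y Hxy.
  assert (H : phi x <> phi y) by (intro E; apply Hxy, (phi_inj HN), E).
  destruct (sep_mdl RF H) as (F & HF & f & Hf & Hne).
  exists (MdlM F). split; [apply mdl_finite; auto|].
  exists (fun m => map_mdl f (phi m)). split; [split|]; auto.
  - intros a b. rewrite phi_mul. apply map_mdl_mul; auto.
  - rewrite phi_one. reflexivity.
Qed.

Section Bwd.
Variable Q : Group.
Variable q : G -> Q.
Hypothesis Hq : group_hom q.
Hypothesis HqN : forall n, N n -> q n = gone.

Definition piq (v : Mdl G) : Pt Q :=
  match v with MOne => P1 | MG _ => PG | MN _ => PN | MH g => PH (q g) | MZ => PZ end.
Definition act_pt (p : Pt Q) (v : Mdl G) : Pt Q :=
  match p with
  | P1 => piq v
  | PG => match v with MOne | MG _ => PG | _ => PZ end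
  | PN => match v with MOne | MN _ => PN | MH g => PH (q g) | _ => PZ end
  | PH t => match v with MOne => PH t | MG g => PH (gmul t (q g)) | _ => PZ end
  | PZ => PZ end.

Lemma pi_mul u v : inM N u -> piq (mdl_mul u v) = act_pt (piq u) v.
Proof.
  intro Hu. destruct u, v; simpl in *; try reflexivity; rewrite Hq; try reflexivity.
  rewrite (HqN Hu), gmul1l; auto.
Qed.
Lemma act_one p : act_pt p MOne = p.
Proof. destruct p; reflexivity. Qed.
Lemma act_mul p u v : inM N u -> act_pt (act_pt p u) v = act_pt p (mdl_mul u v).
Proof.
  intro Hu. destruct p.
  - simpl. symmetry. apply pi_mul; auto.
  - destruct u, v; reflexivity.
  - destruct u, v; simpl in *; try reflexivity; rewrite Hq; try rewrite (HqN Hu), gmul1l; reflexivity.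
  - destruct u, v; simpl in *; try reflexivity. rewrite Hq, gassoc; reflexivity.
  - reflexivity.
Qed.

Lemma pi_LM u v : LM u v -> piq u = piq v.
Proof.
  destruct u, v; simpl; try contradiction; try reflexivity.
  intro H. f_equal. replace g0 with (gmul g (gmul (ginv g) g0)).
  - rewrite Hq, (@HqN (gmul (ginv g) g0) H), gmul1r; auto.
  - rewrite gassoc, gmulVr, gmul1l; reflexivity.
Qed.

Definition PtSet : MSet M.
Proof.
  refine (@Build_MSet M (Pt Q) (fun p m => act_pt p (phi m)) _ _).
  - intro p. rewrite phi_one. apply act_one.
  - intros p a b. rewrite phi_mul. apply act_mul, (inM_phi HN).
Defined.

Lemma sep_action (c d : Lclasses M) : is_finite Q ->
  piq (phi (rep c)) <> piq (phi (rep d)) ->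
  exists Y : MSet M, is_finite Y /\ exists f : Lclasses M -> Y,
    (forall z m, f (Lact z m) = sact Y (f z) m) /\ f c <> f d.
Proof.
  intros HQ Hne. exists PtSet. split; [apply Pt_finite; auto|].
  exists (fun c => piq (phi (rep c))). split; auto.
  intros z m. simpl. unfold Lact.
  rewrite (pi_LM _ _ (LM_of_L (rep_cls (@Lrel M) (@Lrel_refl M) _))).
  rewrite phi_mul. apply pi_mul, (inM_phi HN).
Qed.
End Bwd.

Lemma part2_bwd : residually_finite_group (quotient_group HN) ->
  @residually_finite_action M (Lclasses M) (@Lact M).
Proof.
  intros RF c d Hcd.
  assert (HL : ~ LM (phi (rep c)) (phi (rep d))).
  { intro H. apply Hcd. rewrite <- (cls_rep c), <- (cls_rep d).
    apply cls_eq; [apply Lrel_sym | apply Lrel_trans | apply L_of_LM; exact H]. }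
  assert (triv : piq TG (fun _ : G => (tt : TG)) (phi (rep c)) <> piq TG (fun _ => tt) (phi (rep d)) ->
    exists Y : MSet M, is_finite Y /\ exists f : Lclasses M -> Y,
    (forall z m, f (Lact z m) = sact Y (f z) m) /\ f c <> f d).
  { apply sep_action; [apply TG_hom | reflexivity | apply TG_finite]. }
  destruct (phi (rep c)) eqn:Ec, (phi (rep d)) eqn:Ed; simpl in HL;
    try (exfalso; apply HL; exact I); try (apply triv; discriminate).
  assert (Hne : cls cosrel g <> cls cosrel g0).
  { intro E. apply HL. exact (cls_inj (cosrel_refl HN) E). }
  destruct (RF _ _ Hne) as (Q & HQ & f & Hf & Hfne).
  apply (@sep_action Q (fun k => f (cls cosrel k))); auto.
  - intros a b. rewrite <- (qmul_cls HN). exact (Hf _ _).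
  - intros n Hn. rewrite (qcls_eq HN n gone). exact (hom_one Hf).
    unfold Defs.cosrel. rewrite gmul1r. apply Ninv', Hn.
  - rewrite Ec, Ed. simpl. intro E. injection E. auto.
Qed.

Section Fwd.
Variable Y : MSet M.
Variable fY : Lclasses M -> Y.
Hypothesis Heq : forall z m, fY (Lact z m) = sact Y (fY z) m.

Definition beta (k : G) : Y := fY (cls (@Lrel M) (psi N (MH k))).

Lemma beta_cos k k' : cosrel k k' -> beta k = beta k'.
Proof.
  intro H. unfold beta. f_equal. apply cls_eq; [apply Lrel_sym|apply Lrel_trans|].
  apply L_of_LM. rewrite !phi_psi by exact I. exact H.
Qed.

Lemma beta_act k r : sact Y (beta k) (psi N (MG r)) = beta (gmul k r).
Proof.
  unfold beta. rewrite <- Heq. unfold Lact. f_equal.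
  apply cls_eq; [apply Lrel_sym|apply Lrel_trans|].
  eapply Lrel_trans; [apply Lrel_right, (rep_cls (@Lrel M) (@Lrel_refl M))|].
  replace (mmul (psi N (MH k)) (psi N (MG r))) with (psi N (MH (gmul k r))); [apply Lrel_refl|].
  apply (phi_inj HN). rewrite phi_mul, !phi_psi by exact I. reflexivity.
Qed.

Definition Zt := {y : Y | exists k, y = beta k}.
Definition act_Z (r : G) (z : Zt) : Zt.
  refine (exist _ (sact Y (proj1_sig z) (psi N (MG r))) _).
  destruct z as [y [k ->]]. simpl. exists (gmul k r). apply beta_act.
Defined.

Definition aq (p : quotient_group HN) : EndoMonoid Zt := act_Z (rep p).

Lemma Zeq (z z' : Zt) : proj1_sig z = proj1_sig z' -> z = z'.
Proof. destruct z, z'; simpl; intro; subst; f_equal; apply proof_irrelevance. Qed.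

Lemma aq_mul p p' : aq (gmul p p') = mmul (aq p) (aq p').
Proof.
  simpl. unfold aq. extensionality z. apply Zeq. destruct z as [y [k Hk]]. simpl. subst y.
  rewrite !beta_act, <- gassoc. apply beta_cos, cosrel_lmul. exact (qrep_cls HN _).
Qed.
End Fwd.

Lemma part2_fwd : @residually_finite_action M (Lclasses M) (@Lact M) ->
  residually_finite_group (quotient_group HN).
Proof.
  intros RFA p p' Hpp'.
  assert (Hng : ~ cosrel (rep p) (rep p')).
  { intro H. apply Hpp'. rewrite <- (cls_rep p), <- (cls_rep p'). apply (qcls_eq HN), H. }
  assert (Hcd : cls (@Lrel M) (psi N (MH (rep p))) <> cls (@Lrel M) (psi N (MH (rep p')))).
  { intro E. apply (cls_inj (@Lrel_refl M)) in E. apply LM_of_L in E.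
    rewrite !phi_psi in E by exact I. exact (Hng E). }
  destruct (RFA _ _ Hcd) as (Y & HY & fY & Heq & Hne).
  destruct (@image_group (quotient_group HN) (EndoMonoid (@Zt Y fY)) (@aq Y fY Heq)) as (Q & HQ & th & Hth & Hs).
  - apply aq_mul.
  - apply fun_finite, sig_finite, HY.
  - exists Q. split; auto. exists th. split; auto. intro E. apply Hs in E.
    set (z0 := exist (fun y => exists k, y = @beta Y fY k) (@beta Y fY gone) (ex_intro _ gone eq_refl)).
    apply (f_equal (fun F => proj1_sig (F z0))) in E. unfold aq in E. simpl in E.
    rewrite !(@beta_act Y fY Heq), !gmul1l in E. exact (Hne E).
Qed.
End Main.

Theorem mainTheorem5 (G : Group) (N : G -> Prop) (HN : normal_subgroup G N) :
  (residually_finite_monoid (MGN G N) <-> residually_finite_group G) /\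
  (@residually_finite_action (MGN G N) (Lclasses (MGN G N)) (@Lact (MGN G N))
     <-> residually_finite_group (@quotient_group G N HN)).
Proof.
  split; split.
  - apply part1_fwd; auto.
  - apply part1_bwd; auto.
  - apply part2_fwd.
  - apply part2_bwd.
Qed.
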